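(* Let $T:V\to V$ be a right-linear closed operator with two-sided linear domain, and let $q(s)=\sum_{j=0}^mb_js^j\not\equiv0$ be a polynomial with real coefficients $b_j$. If $q$ has no zeros in $\sigma_S(T)$, then the operator $q[T]:=\sum_{j=0}^mb_jT^j$, with domain $\operatorname{dom}(T^m)$, is a bijection from $\operatorname{dom}(T^m)$ onto $V$.
   Context: $\mathbb{H}$ denotes the quaternions, $V$ a two-sided Banach space over $\mathbb{H}$, $\mathcal{I}$ the identity. For a right-linear closed operator $T$ on $V$ and $s=s_0+s_1e_1+s_2e_2+s_3e_3\in\mathbb{H}$ with $|s|^2=s_0^2+s_1^2+s_2^2+s_3^2$, let $Q_s(T):=T^2-2s_0T+|s|^2\mathcal{I}$ with domain $\operatorname{dom}(T^2)$. The $S$-resolvent set is $\rho_S(T)=\{s\in\mathbb{H}: Q_s(T):\operatorname{dom}(T^2)\to V\text{ is bijective}\}$ and the $S$-spectrum is $\sigma_S(T)=\mathbb{H}\setminus\rho_S(T)$. *)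

(* Defs.v *)
From HB Require Import structures.
From mathcomp Require Import all_boot all_order all_algebra.
From mathcomp Require Import all_classical all_reals all_analysis.
Set Implicit Arguments. Unset Strict Implicit. Unset Printing Implicit Defensive.
Import Order.TTheory GRing.Theory Num.Theory.
Import numFieldNormedType.Exports.
Local Open Scope classical_set_scope.
Local Open Scope ring_scope.

Record quat (R : Type) := Quat { q0 : R; q1 : R; q2 : R; q3 : R }.

Section Quat.
Variable R : realType.

Definition qreal (r : R) : quat R := Quat r 0 0 0.
Definition qzero : quat R := qreal 0.
Definition qone : quat R := qreal 1.

Definition qadd (a b : quat R) : quat R :=
  Quat (q0 a + q0 b) (q1 a + q1 b) (q2 a + q2 b) (q3 a + q3 b).

(* Hamilton product, e1 e2 = e3, e2 e3 = e1, e3 e1 = e2, e_i^2 = -1 *)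
Definition qmul (a b : quat R) : quat R :=
  Quat (q0 a * q0 b - q1 a * q1 b - q2 a * q2 b - q3 a * q3 b)
       (q0 a * q1 b + q1 a * q0 b + q2 a * q3 b - q3 a * q2 b)
       (q0 a * q2 b - q1 a * q3 b + q2 a * q0 b + q3 a * q1 b)
       (q0 a * q3 b + q1 a * q2 b - q2 a * q1 b + q3 a * q0 b).

Definition qnorm2 (s : quat R) : R := q0 s ^+ 2 + q1 s ^+ 2 + q2 s ^+ 2 + q3 s ^+ 2.
Definition qnorm (s : quat R) : R := Num.sqrt (qnorm2 s).

Definition qpow (s : quat R) (n : nat) : quat R := iter n (qmul s) qone.

Definition qeval (p : {poly R}) (s : quat R) : quat R :=
  foldr qadd qzero [seq qmul (qreal p`_j) (qpow s j) | j <- iota 0 (size p)].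
End Quat.

Section TwoSided.
Variables (R : realType) (V : completeNormedModType R).
Variables (lm : quat R -> V -> V) (rm : V -> quat R -> V).

Record two_sided_banach : Prop := {
  lm_addl : forall a b v, lm (qadd a b) v = lm a v + lm b v;
  lm_addr : forall a u v, lm a (u + v) = lm a u + lm a v;
  rm_addl : forall a u v, rm (u + v) a = rm u a + rm v a;
  rm_addr : forall a b v, rm v (qadd a b) = rm v a + rm v b;
  lm_assoc : forall a b v, lm (qmul a b) v = lm a (lm b v);
  rm_assoc : forall a b v, rm v (qmul a b) = rm (rm v a) b;
  lm_rm_comm : forall a b v, rm (lm a v) b = lm a (rm v b);
  lm_real : forall (r : R) v, lm (qreal r) v = r *: v;
  rm_real : forall (r : R) v, rm v (qreal r) = r *: v;
  lm_norm : forall a v, `|lm a v| = qnorm a * `|v|;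
  rm_norm : forall a v, `|rm v a| = qnorm a * `|v|
}.

Definition two_sided_subspace (D : set V) : Prop :=
  D 0 /\ (forall u v, D u -> D v -> D (u + v)) /\
  (forall a u, D u -> D (lm a u)) /\ (forall a u, D u -> D (rm u a)).

Definition right_linear (D : set V) (T : V -> V) : Prop :=
  (forall u v, D u -> D v -> T (u + v) = T u + T v) /\
  (forall a u, D u -> T (rm u a) = rm (T u) a).
End TwoSided.

Section Ops.
Variables (R : realType) (V : completeNormedModType R).

Definition closed_op (D : set V) (T : V -> V) : Prop :=
  forall (u : nat -> V) (x y : V), (forall n, D (u n)) ->
    u n @[n --> \oo] --> x -> T (u n) @[n --> \oo] --> y -> D x /\ T x = y.

Fixpoint dom_pow (D : set V) (T : V -> V) (n : nat) : set V :=
  match n with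
  | 0 => setT
  | n'.+1 => [set v | D v /\ dom_pow D T n' (T v)]
  end.

Definition bij_onto (A : set V) (f : V -> V) : Prop :=
  (forall u v, A u -> A v -> f u = f v -> u = v) /\
  (forall w, exists2 u, A u & f u = w).

Definition Qs (T : V -> V) (s : quat R) (v : V) : V :=
  T (T v) - (2 * q0 s) *: T v + qnorm2 s *: v.

Definition S_resolvent (D : set V) (T : V -> V) : set (quat R) :=
  [set s | bij_onto (dom_pow D T 2) (Qs T s)].

Definition S_spectrum (D : set V) (T : V -> V) : set (quat R) :=
  ~` S_resolvent D T.

Definition poly_op (p : {poly R}) (T : V -> V) (v : V) : V :=
  \sum_(j < size p) p`_j *: iter j T v.
End Ops.

(* Main.v *)
Require Import Defs.
From HB Require Import structures.
From mathcomp Require Import all_boot all_order all_algebra.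
From mathcomp Require Import all_classical all_reals all_analysis.
From mathcomp Require Import complex.
From mathcomp Require Import ring lra.
Import Order.TTheory GRing.Theory Num.Theory.
Import numFieldNormedType.Exports.
Local Open Scope classical_set_scope.
Local Open Scope ring_scope.
Section Alg.
Variable R : realType.
Local Notation C := (complex R).
Local Notation Re := (@complex.Re R).
Local Notation Im := (@complex.Im R).
Definition rcm : {rmorphism R -> C} := real_complex R.
Definition phi (z : C) : quat R := Quat (Re z) (Im z) 0 0.

Lemma cmulE (a b c d : R) : (Complex a b) * (Complex c d) = Complex (a*c - b*d) (a*d + b*c) :> C.
Proof. reflexivity. Qed.
Lemma caddE (a b c d : R) : (Complex a b) + (Complex c d) = Complex (a+c) (b+d) :> C.
Proof. reflexivity. Qed.

Lemma qpow_phi z j : qpow (phi z) j = phi (z ^+ j).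
Proof.
elim: j => [|j IH]; first by rewrite /qpow /= expr0.
rewrite /qpow iterS -/(qpow _ _) IH exprS.
case: z {IH} => a b; case: (_ ^+ j) => c d.
rewrite /phi /qmul /=; congr Quat; by rewrite ?mulr0 ?mul0r ?subr0 ?addr0.
Qed.

Lemma foldr_phi (G : nat -> C) s :
  foldr (@qadd R) (qzero R) [seq phi (G j) | j <- s] = phi (\sum_(j <- s) G j).
Proof.
elim: s => [|j s IH]; first by rewrite big_nil.
rewrite big_cons /= IH /phi /qadd /=.
case: (G j) => a b; case: (\sum_(j <- s) G j) => c d /=.
by rewrite !addr0.
Qed.

Lemma qeval_phi q z : qeval q (phi z) = phi (map_poly rcm q).[z].
Proof.
rewrite /qeval.
have -> : [seq qmul (qreal q`_j) (qpow (phi z) j) | j <- iota 0 (size q)] =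
          [seq phi ((q`_j)%:C%C * z ^+ j) | j <- iota 0 (size q)].
  apply: eq_map => j; rewrite qpow_phi.
  case: (z ^+ j) => c d; rewrite /phi /qmul /qreal /=.
  congr Quat; by rewrite ?mulr0 ?mul0r ?subr0 ?addr0 ?add0r ?sub0r.
rewrite foldr_phi horner_coef size_map_poly.
rewrite -(big_mkord xpredT (fun i => (map_poly rcm q)`_i * z ^+ i)).
apply: congr1; rewrite /index_iota subn0. apply: eq_bigr => i _. by rewrite coef_map.
Qed.

Definition Qpoly (a b : R) : {poly R} := 'X^2 + (- (2 * a)) *: 'X + (a ^+ 2 + b ^+ 2)%:P.

Lemma size_Qpoly a b : size (Qpoly a b) = 3%N.
Proof.
rewrite /Qpoly -addrA size_addl ?size_polyXn //.
apply: (leq_ltn_trans (size_polyD _ _)).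
rewrite gtn_max size_polyC (leq_ltn_trans (size_scale_leq _ _)) ?size_polyX //.
by case: (_ != 0).
Qed.

Lemma coef_Qpoly a b : [/\ (Qpoly a b)`_0 = a ^+ 2 + b ^+ 2, (Qpoly a b)`_1 = - (2 * a)
   & (Qpoly a b)`_2 = 1].
Proof.
by rewrite /Qpoly !coefD !coefZ !coefXn !coefX !coefC /= ?mulr0 ?mulr1 ?addr0 ?add0r.
Qed.

Lemma sqr_lin r : ('X - r%:P) ^+ 2 = Qpoly r 0.
Proof.
rewrite /Qpoly -mul_polyC; rewrite expr0n addr0 polyCN polyCM rmorphXn.
have -> : (2%:P : {poly R}) = 2 by rewrite -[2]/(1 + 1) polyCD.
ring.
Qed.

Lemma root_exists (q : {poly R}) : (1 < size q)%N -> exists z : C, root (map_poly rcm q) z.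
Proof.
move=> hq; apply/closed_rootP; rewrite size_map_poly.
by rewrite neq_ltn hq orbT.
Qed.

Lemma real_root (q : {poly R}) z : Im z = 0 -> root (map_poly rcm q) z -> root q (Re z).
Proof.
case: z => a b /= -> hr.
have h : rcm q.[a] = 0 by rewrite -horner_map; exact/eqP.
by apply/eqP; case: h.
Qed.

Lemma cplx_div (q : {poly R}) z : Im z != 0 -> root (map_poly rcm q) z -> Qpoly (Re z) (Im z) %| q.
Proof.
move=> hIm hr.
set qc := map_poly rcm q.
have hconj : map_poly conjc qc = qc.
  rewrite /qc -map_poly_comp; apply: eq_map_poly => x /=.
  by rewrite /rcm /= /conjc /= oppr0.
have hr' : root qc z^*%C by rewrite -complex_root_conj hconj.
have hne : z^*%C != z.
  case: z hIm {hr hr'} => a b /= hb; apply/negP; rewrite eq_complex /= eqxx /= => /eqP h.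
  by move/eqP: hb; apply; lra.
case/factor_theorem: hr => g hg.
have hg' : root g z^*%C.
  move: hr'; rewrite /qc hg /root hornerM hornerXsubC mulf_eq0 subr_eq0 (negPf hne) orbF //.
case/factor_theorem: hg' => h hh.
rewrite -(dvdp_map rcm).
have -> : map_poly rcm (Qpoly (Re z) (Im z)) = ('X - z^*%C%:P) * ('X - z%:P).
  have e1 : rcm (- (2 * Re z)) = - (z^*%C + z).
    by clear; case: z => a b; rewrite /rcm /=; congr Complex; ring.
  have e2 : rcm (Re z ^+ 2 + Im z ^+ 2) = z^*%C * z.
    by clear; case: z => a b; rewrite /rcm /=; congr Complex; ring.
  rewrite /Qpoly rmorphD /= map_polyC /= e2 rmorphD /= map_polyZ /= e1 map_polyXn map_polyX.
  rewrite -mul_polyC polyCN polyCD polyCM; ring.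
apply/dvdpP; exists h; rewrite mulrA.
exact: (etrans hg (congr1 (fun g => g * ('X - z%:P)) hh)).
Qed.

End Alg.
Arguments phi {R}.
Arguments Qpoly {R}.
Arguments qeval_phi {R}.
Arguments size_Qpoly {R}.
Arguments coef_Qpoly {R}.
Arguments sqr_lin {R}.
Arguments root_exists {R}.
Arguments real_root {R}.
Arguments cplx_div {R}.
From mathcomp Require Import zify.
Ltac nlia := repeat match goal with
   | H : is_true (leq _ _) |- _ => revert H
   | H : @eq nat _ _ |- _ => revert H end;
  do 8 try match goal with |- context [size ?x] => let n := fresh "n" in move: (size x) => n end;
  clear; intros; lia.
Section Ops.
Variables (R : realType) (V : completeNormedModType R).
Variables (lm : quat R -> V -> V) (rm : V -> quat R -> V).
Hypothesis HV : two_sided_banach lm rm.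
Variables (D : set V) (T : V -> V).
Hypothesis HD : two_sided_subspace lm rm D.
Hypothesis HT : right_linear rm D T.

Local Notation dom := (dom_pow D T).
Local Notation pop p := (poly_op p T).

Lemma D0 : D 0. Proof. by case: HD. Qed.
Lemma DD u v : D u -> D v -> D (u + v). Proof. by case: HD => _ [h _]; apply: h. Qed.
Lemma DZ (c : R) u : D u -> D (c *: u).
Proof. by move=> hu; rewrite -(rm_real HV); case: HD => _ [_ [_ h]]; apply: h. Qed.
Lemma DB u v : D u -> D v -> D (u - v).
Proof. by move=> hu hv; rewrite -scaleN1r; apply: DD => //; apply: DZ. Qed.
Lemma D_sum n (F : 'I_n -> V) : (forall i, D (F i)) -> D (\sum_(i < n) F i).
Proof. by move=> h; apply: big_ind => //; [exact: D0 | exact: DD]. Qed.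

Lemma TD u v : D u -> D v -> T (u + v) = T u + T v. Proof. by case: HT => h _; apply: h. Qed.
Lemma TZ (c : R) u : D u -> T (c *: u) = c *: T u.
Proof. by move=> hu; rewrite -!(rm_real HV); case: HT => _ h; apply: h. Qed.
Lemma T0 : T 0 = 0. Proof. by have := @TZ 0 0 D0; rewrite !scale0r. Qed.
Lemma TB u v : D u -> D v -> T (u - v) = T u - T v.
Proof.
move=> hu hv; have -> : u - v = u + (-1) *: v by rewrite scaleN1r.
have hv' : D ((-1) *: v) by apply: DZ.
by rewrite TD // TZ // scaleN1r.
Qed.
Lemma T_sum n (F : 'I_n -> V) : (forall i, D (F i)) -> T (\sum_(i < n) F i) = \sum_(i < n) T (F i).
Proof.
elim: n F => [|n IH] F h; first by rewrite !big_ord0 T0.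
have hs : D (\sum_(i < n) F (widen_ord (leqnSn n) i)) by apply: D_sum => i; apply: h.
by rewrite !big_ord_recr /= TD // IH // => i; apply: h.
Qed.

Lemma dom_powE n v : dom n v <-> forall k, (k < n)%N -> D (iter k T v).
Proof.
elim: n v => [|n IH] v /=; first by split.
split.
  case=> hv /IH h [|k] // hk; rewrite iterSr; exact: h.
move=> h; split; first exact: (h 0%N).
by apply/IH => k hk; rewrite -iterSr; apply: h.
Qed.

Lemma dom_mono m n v : (m <= n)%N -> dom n v -> dom m v.
Proof.
move=> hmn /dom_powE h; apply/dom_powE => k hk; apply: h; exact: leq_trans hmn.
Qed.

Lemma iterTC k x : iter k T (T x) = T (iter k T x).
Proof. by elim: k => //= k ->. Qed.

Lemma iter0 k : iter k T 0 = 0.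
Proof. by elim: k => //= k ->; rewrite T0. Qed.

Lemma dom0 n : dom n 0.
Proof. by apply/dom_powE => k _; rewrite iter0; exact: D0. Qed.

Lemma iterB j x y : dom j x -> dom j y -> iter j T (x - y) = iter j T x - iter j T y.
Proof.
elim: j x y => [//|j IH] x y [hx hx'] [hy hy'].
by rewrite !iterSr TB // IH.
Qed.

Lemma domB n x y : dom n x -> dom n y -> dom n (x - y).
Proof.
move=> hx hy; apply/dom_powE => k hk; rewrite iterB.
- by apply: DB; [move/dom_powE: hx | move/dom_powE: hy]; apply.
- exact: dom_mono (ltnW hk) hx.
- exact: dom_mono (ltnW hk) hy.
Qed.

Lemma popnE n (p : {poly R}) w : (size p <= n)%N -> pop p w = \sum_(j < n) p`_j *: iter j T w.
Proof.
move=> hn; rewrite /poly_op (big_ord_widen n (fun j => p`_j *: iter j T w) hn) big_mkcond.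
apply: eq_bigr => i _; case: ifP => // /negbT; rewrite -leqNgt => h.
by rewrite nth_default // scale0r.
Qed.
Arguments popnE n {p w}.

Lemma poly_op0 w : pop 0 w = 0.
Proof. by rewrite /poly_op size_poly0 big_ord0. Qed.

Lemma poly_opD (p q : {poly R}) w : pop (p + q) w = pop p w + pop q w.
Proof.
set n := maxn (size p) (size q).
rewrite (popnE n (size_polyD p q)) (popnE n (leq_maxl _ _)) (popnE n (leq_maxr _ _)).
by rewrite -big_split; apply: eq_bigr => i _; rewrite coefD scalerDl.
Qed.

Lemma poly_opZ c (p : {poly R}) w : pop (c *: p) w = c *: pop p w.
Proof.
rewrite (popnE _ (size_scale_leq c p)) /poly_op scaler_sumr.
by apply: eq_bigr => i _; rewrite coefZ scalerA.
Qed.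

Lemma poly_opC c w : pop c%:P w = c *: w.
Proof.
rewrite (popnE 1 (size_polyC_leq1 c)) big_ord1 coefC /=.
by [].
Qed.

Lemma poly_opMXC (p : {poly R}) c w : pop (p * 'X + c%:P) w = pop p (T w) + c *: w.
Proof.
have hs : (size (p * 'X + c%:P)%R <= (size p).+1)%N.
  by rewrite size_MXaddC; case: ifP.
rewrite (popnE _ hs) big_ord_recl /= coefD coefMX coefC /= add0r addrC.
congr (_ + _); rewrite /poly_op; apply: eq_bigr => i _.
by rewrite add0n -iterS iterSr coefD coefMX coefC /bump /= add0n addr0.
Qed.

Lemma poly_opXr (r : {poly R}) w : (forall k, (k < size r)%N -> D (iter k T w)) ->
  pop (r * 'X) w = T (pop r w).
Proof.
move=> h; have := poly_opMXC r 0 w; rewrite polyC0 addr0 scale0r addr0 => ->.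
rewrite /poly_op T_sum; last by move=> i; apply: DZ; apply: h.
by apply: eq_bigr => i _; rewrite TZ ?iterTC //; apply: h.
Qed.

Lemma size_MX (r : {poly R}) : r != 0 -> size (r * 'X) = (size r).+1.
Proof. by move=> hr; have := size_MXaddC r 0; rewrite polyC0 addr0 (negPf hr). Qed.

Lemma poly_opM (p r : {poly R}) w : r != 0 ->
  (forall k, (k < (size p).-1 + (size r).-1)%N -> D (iter k T w)) ->
  pop (p * r) w = pop p (pop r w).
Proof.
elim/poly_ind: p r => [|p c IH] r hr hdom.
  by rewrite mul0r !poly_op0.
have [->|hp] := eqVneq p 0.
  by rewrite mul0r add0r mul_polyC poly_opZ poly_opC.
have hsp : size (p * 'X + c%:P) = (size p).+1.
  by rewrite size_MXaddC (negPf hp).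
rewrite hsp /= in hdom.
have sp : (0 < size p)%N by rewrite size_poly_gt0.
have sr : (0 < size r)%N by rewrite size_poly_gt0.
rewrite mulrDl mul_polyC -mulrA (mulrC 'X) poly_opD poly_opZ.
have E : pop (p * (r * 'X)) w = pop p (pop (r * 'X) w).
  apply: IH; first by rewrite mulf_neq0 // polyX_eq0.
  rewrite size_MX // => k hk; apply: hdom; nlia.
rewrite E.
rewrite poly_opXr; last by move=> k hk; apply: hdom; nlia.
by rewrite poly_opMXC.
Qed.

Lemma poly_op_D (s : {poly R}) v : (forall k, (k < size s)%N -> D (iter k T v)) -> D (pop s v).
Proof. by move=> h; apply: D_sum => i; apply: DZ; apply: h. Qed.

Lemma poly_op_Xn i v : pop ('X^i) v = iter i T v.
Proof.
rewrite /poly_op size_polyXn big_ord_recr /= coefXn eqxx scale1r big1 ?add0r //.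
by move=> j _; rewrite coefXn (ltn_eqF (ltn_ord j)) scale0r.
Qed.

Lemma size_XnM i (r : {poly R}) : r != 0 -> size ('X^i * r) = (i + size r)%N.
Proof.
move=> hr; have hX : 'X^i != 0 :> {poly R} by rewrite monic_neq0 // monicXn.
by rewrite size_mul // size_polyXn addSn.
Qed.

Lemma iter_pop i (r : {poly R}) v : r != 0 ->
  (forall k, (k < i + (size r).-1)%N -> D (iter k T v)) ->
  iter i T (pop r v) = pop ('X^i * r) v.
Proof.
move=> hr h; rewrite poly_opM // ?poly_op_Xn //.
by rewrite size_polyXn.
Qed.

Lemma dom_fwd (r : {poly R}) a v : r != 0 -> dom (a + (size r).-1) v -> dom a (pop r v).
Proof.
move=> hr /dom_powE h; apply/dom_powE => i hi.
have sr : (0 < size r)%N by rewrite size_poly_gt0.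
rewrite iter_pop //; last by move=> k hk; apply: h; nlia.
apply: poly_op_D => k; rewrite size_XnM // => hk; apply: h; nlia.
Qed.

Lemma dom_bwd (r : {poly R}) a v : r != 0 -> dom (size r).-1 v -> dom a (pop r v) ->
  dom (a + (size r).-1) v.
Proof.
move=> hr /dom_powE h0 /dom_powE ha; apply/dom_powE.
have sr : (0 < size r)%N by rewrite size_poly_gt0.
set b := (size r).-1.
suff : forall i, (i <= a)%N -> forall k, (k < i + b)%N -> D (iter k T v).
  by move=> H; apply: H.
elim=> [|i IH] hi k hk; first exact: h0.
have [hk'|hk'] := ltnP k (i + b); first by apply: IH => //; exact: ltnW.
have -> : k = (i + b)%N by lia.
have hD := ha i hi.
rewrite iter_pop // in hD; last by move=> j hj; apply: IH => //; exact: ltnW.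
set s := 'X^i * r in hD.
have ss : size s = (i + b).+1 by rewrite /s size_XnM // /b; nlia.
move: hD; rewrite (popnE (i + b).+1) ?ss // big_ord_recr /= => hD.
have hl : s`_(i + b) != 0.
  have -> : s`_(i + b) = lead_coef s by rewrite /lead_coef ss.
  by rewrite lead_coef_eq0 /s mulf_neq0 // monic_neq0 ?monicXn.
set rest := \sum_(j < i + b) _ in hD.
have hrest : D rest.
  apply: D_sum => j; apply: DZ; apply: IH; [exact: ltnW | exact: ltn_ord].
have -> : iter (i + b) T v = (s`_(i + b))^-1 *: ((rest + s`_(i + b) *: iter (i + b) T v) - rest).
  by rewrite addrC addKr scalerA mulVf // scale1r.
by apply: DZ; apply: DB.
Qed.

Lemma poly_opB (p : {poly R}) x y : dom (size p).-1 x -> dom (size p).-1 y ->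
  pop p (x - y) = pop p x - pop p y.
Proof.
move=> hx hy; rewrite /poly_op -sumrB; apply: eq_bigr => i _.
have hi : (i <= (size p).-1)%N by have := ltn_ord i; nlia.
by rewrite iterB ?scalerBr //; apply: dom_mono hi _.
Qed.

Lemma poly_op_at0 (p : {poly R}) : pop p 0 = 0.
Proof. by rewrite /poly_op big1 // => i _; rewrite iter0 scaler0. Qed.

Definition Good (p : {poly R}) := bij_onto (dom (size p).-1) (pop p).

Lemma Good_mul (p r : {poly R}) : p != 0 -> r != 0 -> Good p -> Good r -> Good (p * r).
Proof.
move=> hp hr [ip sp] [ir sr].
have hs : (size (p * r)).-1 = ((size p).-1 + (size r).-1)%N.
  rewrite size_mul //; have := size_poly_gt0 p; have := size_poly_gt0 r.
  rewrite hp hr; nlia.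
have hM : forall v, dom (size (p * r)).-1 v -> pop (p * r) v = pop p (pop r v).
  by move=> v; rewrite hs => /dom_powE h; apply: poly_opM.
rewrite /Good; split.
  move=> u v hu hv; rewrite !hM // => e.
  move: hu hv; rewrite hs => hu hv.
  apply: ir; [exact: dom_mono (leq_addl _ _) hu | exact: dom_mono (leq_addl _ _) hv|].
  by apply: ip => //; apply: dom_fwd.
move=> w; have [u hu <-] := sp w; have [x hx hxu] := sr u.
have hx' : dom (size (p * r)).-1 x by rewrite hs; apply: dom_bwd => //; rewrite hxu.
by exists x => //; rewrite hM // hxu.
Qed.

Lemma Good_sqr (p : {poly R}) : p != 0 -> Good (p * p) -> Good p.
Proof.
move=> hp [i s].
have hs : (size (p * p)).-1 = ((size p).-1 + (size p).-1)%N.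
  rewrite size_mul //; have := size_poly_gt0 p; rewrite hp; nlia.
split.
  move=> u v hu hv e.
  have huv := @domB _ u v hu hv.
  have h0 : pop p (u - v) = 0 by rewrite poly_opB // e subrr.
  have hd : dom (size (p * p)).-1 (u - v).
    by rewrite hs; apply: dom_bwd => //; rewrite h0; apply: dom0.
  have : u - v = 0.
    apply: i => //; first exact: dom0.
    rewrite (poly_op_at0 (p * p)) poly_opM ?h0 ?poly_op_at0 //.
    by move=> k; rewrite -hs; move/dom_powE: hd; apply.
  by move/eqP; rewrite subr_eq0 => /eqP.
move=> w; have [u hu <-] := s w.
move: (hu); rewrite hs => hu'.
exists (pop p u); first exact: dom_fwd hu'.
by rewrite poly_opM //; move/dom_powE: hu'.
Qed.

Lemma Good_C c : c != 0 -> Good c%:P.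
Proof.
move=> hc; rewrite /Good size_polyC hc /=; split.
  by move=> u v _ _; rewrite !poly_opC; apply: scalerI.
by move=> w; exists (c^-1 *: w) => //; rewrite poly_opC scalerA mulfV // scale1r.
Qed.

Lemma Good_Q (a b : R) : S_resolvent D T (Quat a b 0 0) -> Good (@Qpoly R a b).
Proof.
rewrite /Good size_Qpoly /S_resolvent /=.
have -> : pop (@Qpoly R a b) = Qs T (Quat a b 0 0); last by move=> h; exact: h.
apply: funext => v.
have [c0 c1 c2] := @coef_Qpoly R a b.
rewrite (popnE 3) ?size_Qpoly // !big_ord_recr big_ord0 /= c0 c1 c2 /Qs /qnorm2 /=.
rewrite add0r scale1r expr0n /= !addr0 scaleNr.
by rewrite [RHS]addrC [T (T v) + _]addrC addrA.
Qed.


Lemma root_mapM (h g : {poly R}) w : root (map_poly (rcm R) h) w ->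
  root (map_poly (rcm R) (h * g)) w.
Proof. by move=> hr; rewrite rmorphM /= rootM hr. Qed.

Lemma main_ind n : forall q : {poly R}, (size q <= n)%N -> q != 0 ->
  (forall z, root (map_poly (rcm R) q) z -> S_resolvent D T (phi z)) -> Good q.
Proof.
elim: n => [|n IH] q hs hq hz.
  by move: hs; rewrite leqn0 size_poly_eq0 (negPf hq).
have [hs1|hs1] := leqP (size q) 1.
  have hqc : q = (q`_0)%:P by apply: size1_polyC.
  rewrite hqc; apply: Good_C; apply/eqP => h0; move/eqP: hq; apply.
  by rewrite hqc h0.
have [z hzr] := root_exists q hs1.
have hres := hz z hzr.
have [hIm|hIm] := eqVneq (complex.Im z) 0.
  have := real_root q z hIm hzr; case/factor_theorem => h hh.
  set r := complex.Re z in hh hres.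
  have hX : ('X - r%:P) != 0 by rewrite monic_neq0 // monicXsubC.
  have hh0 : h != 0 by apply/eqP => h0; move/eqP: hq; apply; rewrite hh h0 mul0r.
  rewrite hh; apply: Good_mul => //.
    apply: IH => //.
      move: hs; rewrite hh size_mul // size_XsubC; nlia.
    by move=> w hw; apply: hz; rewrite hh; apply: root_mapM.
  apply: Good_sqr => //; rewrite -expr2 sqr_lin; apply: Good_Q.
  by move: hres; rewrite /phi hIm.
have := cplx_div q z hIm hzr; case/dvdpP => h hh.
have hQ : Qpoly (complex.Re z) (complex.Im z) != 0.
  by rewrite -size_poly_gt0 size_Qpoly.
have hh0 : h != 0 by apply/eqP => h0; move/eqP: hq; apply; rewrite hh h0 mul0r.
rewrite hh; apply: Good_mul => //.
  apply: IH => //.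
    move: hs; rewrite hh size_mul // size_Qpoly; nlia.
  by move=> w hw; apply: hz; rewrite hh; apply: root_mapM.
exact: Good_Q.
Qed.

End Ops.

Theorem lemma3p11 (R : realType) (V : completeNormedModType R)
  (lm : quat R -> V -> V) (rm : V -> quat R -> V)
  (HV : two_sided_banach lm rm)
  (D : set V) (T : V -> V)
  (HD : two_sided_subspace lm rm D)
  (HT : right_linear rm D T)
  (Hcl : closed_op D T)
  (q : {poly R}) (Hq : q != 0)
  (Hz : forall s, S_spectrum D T s -> qeval q s <> qzero R) :
  bij_onto (dom_pow D T (size q).-1) (poly_op q T).
Proof.
apply: (@main_ind R V lm rm HV D T HD HT (size q) q (leqnn _) Hq).
move=> z hz; case: (pselect (S_resolvent D T (phi z))) => // hn.
exfalso; apply: (Hz (phi z) hn).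
by rewrite qeval_phi; move/eqP: hz => ->.
Qed.
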